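(* For every positive integer $n$, $\chi_{\mu_2}(Q_n)\le \gamma(Q_n)$.
   Context: $Q_n$ is the $n$-dimensional hypercube: vertices are binary $n$-tuples, two being adjacent iff they differ in exactly one coordinate. $\gamma(G)$ is the domination number: the minimum size of a set $D$ such that every vertex outside $D$ has a neighbor in $D$. A set $M\subseteq V(G)$ is a $2$-distance mutual-visibility set if for every two vertices $u,v\in M$ there exists a shortest $u,v$-path of length at most $2$ none of whose internal vertices lies in $M$. $\chi_{\mu_2}(G)$ is the minimum cardinality of a partition of $V(G)$ into $2$-distance mutual-visibility sets. *)

(* Defs.v *)
From mathcomp Require Import all_boot.
Set Implicit Arguments. Unset Strict Implicit. Unset Printing Implicit Defensive.

Section Graph.
Variables (V : finType) (adj : rel V).

Definition dominating (D : {set V}) : bool :=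
  [forall v, (v \notin D) ==> [exists d in D, adj v d]].

(* 2-distance mutual visibility: for all u, v in M there is a shortest
   u,v-path of length <= 2 whose internal vertices avoid M.
   Shortest paths of length 0/1 have no internal vertex; a shortest path
   of length 2 is u - w - v with u <> v and u, v non-adjacent. *)
Definition mv2 (M : {set V}) : bool :=
  [forall u in M, forall v in M,
     [|| u == v, adj u v |
        [exists w, [&& w \notin M, adj u w & adj w v]]]].

Lemma dominating_exists : exists n, [exists D : {set V}, dominating D && (#|D| == n)].
Proof.
exists #|[set: V]|; apply/existsP; exists [set: V]; rewrite eqxx andbT.
by apply/forallP => v; rewrite in_setT.
Qed.

Definition domination_number : nat := ex_minn dominating_exists.

Definition mv2_partition (P : {set {set V}}) : bool :=
  partition P [set: V] && [forall B in P, mv2 B].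

Lemma mv2_partition_exists :
  exists n, [exists P : {set {set V}}, mv2_partition P && (#|P| == n)].
Proof.
exists #|[set [set v] | v : V]|; apply/existsP; exists [set [set v] | v : V].
rewrite eqxx andbT /mv2_partition; apply/andP; split.
  apply/and3P; split.
  - apply/eqP/setP => x; rewrite in_setT; apply/bigcupP.
    by exists [set x]; [apply/imsetP; exists x | rewrite in_set1].
  - apply/trivIsetP => A B /imsetP[a _ ->] /imsetP[b _ ->] neq.
    rewrite disjoints1 in_set1; apply/eqP => eab; move: neq; by rewrite eab eqxx.
  - apply/imsetP => -[x _] /setP /(_ x); by rewrite in_set1 eqxx in_set0.
apply/forallP => B; apply/implyP => /imsetP[b _ ->].
apply/forallP => u; apply/implyP; rewrite in_set1 => /eqP ->.
apply/forallP => v; apply/implyP; rewrite in_set1 => /eqP ->.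
by rewrite eqxx.
Qed.

Definition chi_mu2 : nat := ex_minn mv2_partition_exists.

End Graph.

Definition hcube_vertex (n : nat) := {ffun 'I_n -> bool}.
Definition hcube_adj (n : nat) : rel (hcube_vertex n) :=
  fun x y => #|[set i | x i != y i]| == 1.

(* Main.v *)
Require Import Defs.
From mathcomp Require Import all_boot.
Set Implicit Arguments. Unset Strict Implicit. Unset Printing Implicit Defensive.

Section HC.
Variable n : nat.
Local Notation T := {ffun 'I_n -> bool}.
Local Notation adj := (@hcube_adj n).

Definition flip (x : T) (i : 'I_n) : T := [ffun k => if k == i then ~~ x k else x k].

Lemma adj_sym (x y : T) : adj x y = adj y x.
Proof.
rewrite /hcube_adj; congr (_ == _); apply: eq_card => k; rewrite !inE; by rewrite eq_sym.
Qed.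

Lemma adj_flip (x : T) (i : 'I_n) : adj x (flip x i).
Proof.
rewrite /hcube_adj; apply/eqP; rewrite -(cards1 i); apply: eq_card => k.
rewrite !inE ffunE; case: (eqVneq k i) => [->|ki]; first by case: (x i).
by rewrite eqxx.
Qed.

Lemma adjP (x y : T) : adj x y -> exists i, y = flip x i.
Proof.
rewrite /hcube_adj => /cards1P [i Hi]; exists i; apply/ffunP => k; rewrite ffunE.
move/setP: Hi => /(_ k); rewrite !inE /=.
case: (eqVneq k i) => [->|_]; first by rewrite ?eqxx; case: (x i); case: (y i).
by case: (x k); case: (y k).
Qed.

Lemma key (D : {set T}) : dominating adj D ->
  exists P, mv2_partition adj P && (#|P| <= #|D|).
Proof.
move=> domD.
pose f (v : T) := if v \in D then v else odflt v [pick d in D | adj v d].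
have fD v : f v \in D.
  rewrite /f; case: ifP => // vD.
  move/forallP: domD => /(_ v); rewrite vD /= => /existsP [d /andP [dD advd]].
  case: pickP => [e /andP [] //|] /(_ d); by rewrite dD advd.
have fN v : v \notin D -> adj v (f v).
  move=> vD; rewrite /f (negbTE vD).
  move/forallP: domD => /(_ v); rewrite vD /= => /existsP [d /andP [dD advd]].
  case: pickP => [e /andP [] //|] /(_ d); by rewrite dD advd.
have fid v : v \in D -> f v = v by rewrite /f => ->.
pose B d := [set x | f x == d].
exists [set B d | d in D]; apply/andP; split; last exact: leq_imset_card.
apply/andP; split.
  apply/and3P; split.
  - apply/eqP/setP => x; rewrite in_setT; apply/bigcupP.
    by exists (B (f x)); [apply/imsetP; exists (f x) | rewrite inE].
  - apply/trivIsetP => A1 A2 /imsetP[a aD ->] /imsetP[b bD ->] neq.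
    apply/pred0P => x /=; rewrite !inE; apply/negP => /andP [/eqP h1 /eqP h2].
    by move: neq; rewrite -h1 -h2 eqxx.
  - apply/imsetP => -[d dD] /setP /(_ d); by rewrite !inE fid // eqxx.
apply/forallP => A; apply/implyP => /imsetP[d dD ->].
have nbr x : f x = d -> x != d -> adj d x.
  move=> fx xd; have xD : x \notin D by apply: contra xd => xD; rewrite -fx fid.
  by rewrite adj_sym -fx; apply: fN.
apply/forallP => u; apply/implyP; rewrite inE => /eqP fu.
apply/forallP => v; apply/implyP; rewrite inE => /eqP fv.
case: (eqVneq u v) => [->|uv] //=.
case: (eqVneq u d) => [ud|ud].
  by move: uv; rewrite ud => dv; rewrite nbr // eq_sym.
case: (eqVneq v d) => [vd|vd].
  by rewrite vd adj_sym nbr.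
have [i ui] := adjP (nbr u fu ud).
have [j vj] := adjP (nbr v fv vd).
have ij : i != j by apply: contraNneq uv => ij; rewrite ui vj ij.
apply/orP; right; apply/existsP; exists (flip u j).
have ji : j != i by rewrite eq_sym.
have wv : flip u j = flip v i.
  apply/ffunP => k; rewrite ui vj !ffunE.
  case: (eqVneq k j) => [->|kj]; first by rewrite ?eqxx ?(negbTE ij) ?(negbTE ji).
  by case: (eqVneq k i) => [->|ki]; rewrite ?eqxx ?(negbTE ij) ?(negbTE ji).
rewrite adj_flip wv adj_sym adj_flip !andbT inE.
apply/negP => /eqP fw.
have wd : flip v i != d.
  apply/negP => /eqP /ffunP /(_ i); rewrite vj !ffunE eqxx (negbTE ij).
  by case: (d i).
have := nbr _ fw wd; rewrite -wv /hcube_adj.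
suff -> : [set k | d k != flip u j k] = [set i; j].
  by rewrite cards2 ij.
apply/setP => k; rewrite !inE ui !ffunE.
case: (eqVneq k j) => [->|kj].
  by rewrite ?eqxx ?(negbTE ij) ?(negbTE ji) ?orbT; case: (d j).
by case: (eqVneq k i) => [->|ki]; rewrite ?eqxx ?(negbTE ij) ?(negbTE ji) ?orbT /=; case: (d _).
Qed.

End HC.

Theorem proposition6p3 (n : nat) (hn : 0 < n) :
  chi_mu2 (@hcube_adj n) <= domination_number (@hcube_adj n).
Proof.
rewrite /domination_number; case: ex_minnP => m /existsP [D /andP [domD /eqP cD]] _.
have [P /andP [HP cP]] := key domD.
rewrite /chi_mu2; case: ex_minnP => c _ minc.
rewrite -cD; apply: leq_trans cP; apply: minc.
by apply/existsP; exists P; rewrite HP eqxx.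
Qed.
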